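(* Let $s\ge3$ be an integer, $\psi_s(z):=z^{s-1}(z+s)-(s-1)^{s-1}$, and let $\alpha$ be a nontrivial root of $\psi_s$ of degree $d$ as an algebraic number, with conjugates $\beta_1,\dots,\beta_d$ (including $\alpha$). Put $M:=\prod_{j=1}^d(s+\beta_j)$ and $N:=\prod_{j=1}^d\beta_j$ (both rational integers). Then there is an integer $n$ with $|n|\ge2$, $n\mid(s-1)$, $M=n^{s-1}$ and $nN=(s-1)^d$.
   Context: When $s$ is odd, $z=1-s$ is a double root of $\psi_s$, called trivial; all other roots are nontrivial. When $s$ is even all roots are nontrivial. *)

(* Defs.v *)
From mathcomp Require Import all_boot all_order all_algebra all_field.
Set Implicit Arguments. Unset Strict Implicit. Unset Printing Implicit Defensive.
Import Order.TTheory GRing.Theory Num.Theory.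
Local Open Scope ring_scope.

Definition psi (s : nat) : {poly algC} :=
  'X ^+ (s.-1) * ('X + (s%:R)%:P) - ((s.-1 ^ s.-1)%N%:R)%:P.

Definition nontrivial_root (s : nat) (a : algC) : bool :=
  root (psi s) a && ~~ (odd s && (a == 1 - s%:R)).

(* Main.v *)
Require Import Defs.
From mathcomp Require Import all_boot all_order all_algebra all_field.
From mathcomp Require Import ring zify.
Import Order.TTheory GRing.Theory Num.Theory.
Set Implicit Arguments. Unset Strict Implicit.
Local Open Scope ring_scope.

Lemma nneg_real (a : algC) : 0 <= a -> a \is Num.real.
Proof. exact: ger0_real. Qed.

Lemma F2_lem (m : nat) (t : algC) : t ^+ m.+1 = m.+1%:R * t + m%:R ->
  m.+1%:R * `|1 + t| - 1 <= `|t| ^+ m.+1.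
Proof.
move=> Ht; rewrite -normrX Ht.
have -> : m.+1%:R * t + m%:R = m.+1%:R * (1 + t) - 1.
  by rewrite -natr1; ring.
have := lerB_dist (m.+1%:R * (1 + t)) 1.
by rewrite normrM normr_nat normr1.
Qed.

Lemma F4_lem (m : nat) (t : algC) : t ^+ m.+1 = m.+1%:R * t + m%:R ->
  `|t| ^+ m.+1 <= m.+1%:R * `|t| + m%:R.
Proof.
move=> Ht; rewrite -normrX Ht.
by apply: le_trans (ler_normD _ _) _; rewrite normrM !normr_nat.
Qed.

Lemma F3_lem (t : algC) : 1 - `|1 + t| <= `|t|.
Proof.
have := lerB_dist 1 (1 + t).
by rewrite normr1 opprD addrA subrr add0r normrN.
Qed.

Lemma rle_m (m : nat) (r : algC) : (2 <= m)%N -> 0 <= r ->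
  r ^+ m.+1 <= m.+1%:R * r + m%:R -> r <= m%:R.
Proof.
move=> hm r0 F4.
rewrite real_leNgt ?nneg_real ?ler0n //; apply/negP => mr.
have r_pos : 0 < r by apply: (le_lt_trans _ mr); rewrite ler0n.
have h1 : r ^+ m.+1 < r * m.+2%:R.
  apply: le_lt_trans F4 _.
  by rewrite -(natr1 m.+1) mulrDr mulr1 mulrC ltrD2l.
have h2 : r ^+ m < m.+2%:R by rewrite -(ltr_pM2l r_pos) -exprS.
have h3 : (m.+2 <= m ^ m)%N.
  have : (m * 2 <= m ^ m)%N.
    case: m hm {F4 mr h1 h2} => [|[|k]] // _.
    by rewrite expnS leq_mul2l /= -{1}(expn0 k.+2) ltn_exp2l.
  by move=> H; apply: leq_trans H; rewrite muln2 -addnn -addn2 leq_add2l.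
have h4 : (m%:R : algC) ^+ m < r ^+ m.
  by rewrite ltr_pXn2r ?(leq_trans _ hm) // nnegrE ?ler0n.
move: (lt_trans h4 h2); rewrite -natrX ltr_nat ltnNge h3.
by [].
Qed.

Lemma ineqA (m : nat) (r x : algC) : (2 <= m)%N -> 0 <= r -> 0 <= x ->
  m.+1%:R * x - 1 <= r ^+ m.+1 -> r ^+ m.+1 <= m.+1%:R * r + m%:R ->
  1 <= r -> x < r ^+ m.
Proof.
move=> hm r0 x0 F2 F4 r1.
have rm := @rle_m m r hm r0 F4.
rewrite real_ltNge ?nneg_real ?exprn_ge0 //; apply/negP => hx.
have e1 : m.+1%:R * r ^+ m <= r * r ^+ m + 1.
  apply: le_trans (ler_wpM2l (ler0n _ _) hx) _.
  by rewrite -exprS -lerBlDr.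
have e2 : (m.+1%:R - r) * r ^+ m <= 1 by rewrite mulrBl lerBlDr addrC.
have rs : r <= m.+1%:R by apply: (le_trans rm); rewrite ler_nat.
have e3 : (m.+1%:R - r) * r <= (m.+1%:R - r) * r ^+ m.
  by apply: ler_wpM2l; rewrite ?subr_ge0 //; apply: ler_eXnr => //; exact: ltnW.
have e4 : m%:R <= (m.+1%:R - r) * r.
  have -> : (m.+1%:R - r) * r = m%:R + (r - 1) * (m%:R - r) by rewrite -natr1; ring.
  by rewrite lerDl mulr_ge0 // subr_ge0.
have h := le_trans e4 (le_trans e3 e2).
have : (m <= 1)%N by rewrite -(ler_nat algC).
by rewrite leqNgt hm.
Qed.
Lemma natfact k : (3 <= k)%N -> (k.+1 ^ k <= k ^ k.+1)%N.
Proof.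
elim: k => // k IH; rewrite leq_eqVlt; case/orP => [/eqP [<-] | hk]; first done.
have {}IH := IH hk.
have h1 : (k * k.+2 <= k.+1 * k.+1)%N by nia.
have h2 : ((k * k.+2) ^ k.+1 <= (k.+1 * k.+1) ^ k.+1)%N by rewrite leq_exp2r.
rewrite !expnMn in h2.
have h3 : (k.+1 ^ k * k.+2 ^ k.+1 <= k.+1 ^ k * k.+1 ^ k.+2)%N.
  apply: leq_trans (leq_mul IH (leqnn _)) _.
  by apply: (leq_trans h2); rewrite -!expnD !addSn !addnS.
by rewrite leq_pmul2l ?expn_gt0 in h3.
Qed.

Lemma ineqB (m : nat) (r x : algC) : (3 <= m)%N -> 0 <= r -> 0 <= x ->
  m.+1%:R * x - 1 <= r ^+ m.+1 -> 1 - x <= r -> r < 1 -> x <= r ^+ m.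
Proof.
move=> hm r0 x0 F2 F3 r1.
rewrite real_leNgt ?nneg_real ?exprn_ge0 //; apply/negP => hx.
have e1 : r ^+ m.+1 <= r ^+ m by rewrite exprS ler_piMl ?exprn_ge0 // ltW.
have e2 : m%:R * x < 1.
  have := le_lt_trans (le_trans F2 e1) hx.
  by rewrite -natr1 mulrDl mul1r ltrBlDr [x + 1]addrC ltrD2r.
move: hm; rewrite leq_eqVlt; case/orP => [/eqP hm3 | hm4].
  subst m.
  have a : 10%:R * r < 7%:R.
    rewrite real_ltNge ?nneg_real ?ler0n ?mulr_ge0 //; apply/negP => h.
    have h1 : (7%:R : algC) ^+ 3 <= (10%:R * r) ^+ 3.
      by rewrite ler_pXn2r // nnegrE ?ler0n ?mulr_ge0.
    rewrite exprMn -!natrX in h1.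
    have h2 : (10 ^ 3)%:R * r ^+ 3 <= (10 ^ 3)%:R * x := ler_wpM2l (ler0n _ _) (ltW hx).
    have : ((3 * 7 ^ 3)%:R : algC) < (10 ^ 3)%:R.
      rewrite natrM; apply: le_lt_trans (ler_wpM2l (ler0n _ 3) (le_trans h1 h2)) _.
      rewrite mulrCA -[X in _ < X]mulr1 ltr_pM2l // ltr0n //.
    by rewrite ltr_nat.
  have b : 33%:R * x <= 10%:R.
    have h1 : 10%:R * r ^+ 4 <= 7%:R * x.
      rewrite exprS mulrA; apply: le_trans (ler_wpM2r (exprn_ge0 _ r0) (ltW a)) _.
      by apply: ler_wpM2l; rewrite ?ler0n ?ltW.
    have h2 : 10%:R * (4%:R * x - 1) <= 10%:R * r ^+ 4 := ler_wpM2l (ler0n _ _) F2.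
    have : 0 <= 7%:R * x - 10%:R * (4%:R * x - 1) by rewrite subr_ge0 (le_trans h2 h1).
    have -> : 7%:R * x - 10%:R * (4%:R * x - 1) = 10%:R - 33%:R * x :> algC by ring.
    by rewrite subr_ge0.
  have c : 23%:R <= 33%:R * r.
    have := ler_wpM2l (ler0n algC 33) F3.
    rewrite mulrBr mulr1 => h; apply: le_trans h.
    have : 0 <= 10%:R - 33%:R * x :> algC by rewrite subr_ge0.
    have -> : 10%:R - 33%:R * x = 33%:R - 33%:R * x - 23%:R :> algC by ring.
    by rewrite subr_ge0.
  have h1 : (23%:R : algC) ^+ 3 <= (33%:R * r) ^+ 3.
    by rewrite ler_pXn2r // nnegrE ?ler0n ?mulr_ge0.
  have h2 : (33%:R * r) ^+ 3 <= 33%:R ^+ 2 * (33%:R * x) :> algC.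
    rewrite exprMn; apply: le_trans (ler_wpM2l (exprn_ge0 _ (ler0n _ _)) (ltW hx)) _.
    by rewrite mulrA -exprSr.
  have h3 : 33%:R ^+ 2 * (33%:R * x) <= 33%:R ^+ 2 * 10%:R :> algC.
    by apply: ler_wpM2l b; rewrite exprn_ge0 ?ler0n.
  have := le_trans h1 (le_trans h2 h3).
  by rewrite -!natrX -natrM ler_nat.
have m0 : (0 < m)%N by apply: leq_trans hm4.
have e3 : m%:R - 1 <= m%:R * r.
  have := ler_wpM2l (ler0n algC m) F3.
  rewrite mulrBr mulr1 => h; apply: le_trans h.
  by rewrite lerD2l lerN2 ltW.
have e4 : (m%:R - 1) ^+ m <= (m%:R * r) ^+ m.
  by rewrite ler_pXn2r // nnegrE ?subr_ge0 ?ler1n ?mulr_ge0.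
have e5 : (m%:R - 1 : algC) = (m.-1)%:R by rewrite -{1}(prednK m0) -natr1 addrK.
have nf : (m ^ m.-1 <= m.-1 ^ m)%N.
  by have := @natfact (m.-1); rewrite prednK //; apply; rewrite -ltnS prednK.
have e6 : (m%:R : algC) ^+ m.-1 <= (m%:R : algC) ^+ m.-1 * (m%:R * r ^+ m).
  rewrite mulrA -exprSr prednK // -exprMn; apply: le_trans e4.
  by rewrite e5 -!natrX ler_nat.
have e7 : 1 <= m%:R * r ^+ m.
  have mp : (0:algC) < m%:R by rewrite ltr0n.
  by rewrite -(ler_pM2l (exprn_gt0 m.-1 mp)) mulr1.
have e8 : m%:R * r ^+ m < 1.
  apply: le_lt_trans e2; apply: ler_wpM2l; first exact: ler0n.
  exact: ltW.
by move: (le_lt_trans e7 e8); rewrite ltxx.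
Qed.

Lemma psi_hornerE m (b : algC) :
  (psi m.+1).[b] = b ^+ m * (b + m.+1%:R) - (m%:R) ^+ m.
Proof. by rewrite /psi /= !hornerE natrX. Qed.

Lemma psi_root_eq m (b : algC) : root (psi m.+1) b ->
  b ^+ m * (b + m.+1%:R) = m%:R ^+ m.
Proof. by rewrite /root psi_hornerE subr_eq0 => /eqP. Qed.

Lemma psi_root_neq0 m (b : algC) : (0 < m)%N -> root (psi m.+1) b -> b != 0.
Proof.
move=> m0 /psi_root_eq; apply: contraPneq => ->.
rewrite expr0n eqn0Ngt m0 /= mul0r => /esym/eqP.
by rewrite expf_eq0 pnatr_eq0 eqn0Ngt m0 andbF.
Qed.

Lemma t_pow m (b : algC) : (0 < m)%N -> root (psi m.+1) b ->
  (m%:R / b) ^+ m = m.+1%:R + b.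
Proof.
move=> m0 hb; have b0 := psi_root_neq0 m0 hb.
rewrite expr_div_n -(psi_root_eq hb) mulrC mulKf ?expf_neq0 //.
by rewrite addrC.
Qed.

Lemma t_eq m (b : algC) : (0 < m)%N -> root (psi m.+1) b ->
  (m%:R / b) ^+ m.+1 = m.+1%:R * (m%:R / b) + m%:R.
Proof.
move=> m0 hb; have b0 := psi_root_neq0 m0 hb.
rewrite exprS t_pow // mulrDr [m%:R / b * b]divfK //.
by rewrite mulrC.
Qed.

Lemma t_Aint m (b : algC) : (0 < m)%N -> root (psi m.+1) b ->
  m%:R / b \in Aint.
Proof.
move=> m0 hb.
pose p : {poly algC} := 'X ^+ m.+1 - (m.+1%:R *: 'X + (m%:R)%:P).
apply: (@root_monic_Aint p).
- by rewrite /root /p hornerD hornerN hornerD hornerZ hornerX hornerC hornerXn t_eq // subrr.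
- rewrite monicE /p lead_coefDl ?lead_coefXn //.
  rewrite size_polyN size_polyXn ltnS.
  apply: leq_trans (size_polyD _ _) _; rewrite geq_max.
  apply/andP; split; last by apply: leq_trans (size_polyC_leq1 _) _.
  apply: leq_trans (size_scale_leq _ _) _; rewrite size_polyX.
  exact: m0.
- apply/polyOverP => i.
  rewrite /p coefB coefD coefZ coefX coefC coefXn.
  set e := (_ - _); suff : e \is a Num.int by [].
  by rewrite /e rpredB ?rpredD ?rpredM ?rpred_nat //; case: eqP; rewrite ?rpred_nat ?rpred0.
Qed.

Lemma prod_opp (I : Type) (l : seq I) (F : I -> algC) :
  \prod_(x <- l) (- F x) = (-1) ^+ size l * \prod_(x <- l) F x.
Proof.
elim: l => [|a l IH]; first by rewrite !big_nil mulr1.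
by rewrite !big_cons IH exprS; ring.
Qed.

Lemma prod_cst (l : seq algC) (c : algC) : \prod_(x <- l) c = c ^+ size l.
Proof.
elim: l => [|a l IH]; first by rewrite big_nil.
by rewrite big_cons IH exprS.
Qed.

Lemma prod_lt (l : seq algC) (f g : algC -> algC) :
  (forall i, i \in l -> 0 <= f i) -> (forall i, i \in l -> f i <= g i) ->
  (forall i, i \in l -> 0 < g i) -> (exists2 i, i \in l & f i < g i) ->
  \prod_(i <- l) f i < \prod_(i <- l) g i.
Proof.
elim: l => [|a l IH] hf hfg hg [i]; first by rewrite in_nil.
have hf' : forall j, j \in l -> 0 <= f j by move=> j hj; apply: hf; rewrite inE hj orbT.
have hfg' : forall j, j \in l -> f j <= g j by move=> j hj; apply: hfg; rewrite inE hj orbT.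
have hg' : forall j, j \in l -> 0 < g j by move=> j hj; apply: hg; rewrite inE hj orbT.
have Fle : \prod_(j <- l) f j <= \prod_(j <- l) g j.
  rewrite big_seq [X in _ <= X]big_seq; apply: ler_prod => j hj.
  by rewrite hf' ?hfg'.
have F0 : 0 <= \prod_(j <- l) f j by rewrite big_seq; apply: prodr_ge0 => j /hf'.
have G0 : 0 < \prod_(j <- l) g j by rewrite big_seq; apply: prodr_gt0 => j /hg'.
have fa := hf a (mem_head _ _); have ga := hg a (mem_head _ _).
rewrite inE => /orP [/eqP -> | hi] hlt; rewrite !big_cons.
  apply: le_lt_trans (ler_wpM2l fa Fle) _.
  by rewrite ltr_pM2r.
apply: le_lt_trans (ler_wpM2r F0 (hfg a (mem_head _ _))) _.
by rewrite ltr_pM2l // IH //; exists i.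
Qed.

Lemma minC_rat_root (alpha c : algC) : c \in Crat ->
  root (minCpoly alpha) c -> alpha = c.
Proof.
have [p [Dp mon] dv] := minCpolyP alpha.
case/CratP => a ->; rewrite Dp fmorph_root => /factor_theorem [g Dg].
have : root (map_poly ratr p) alpha by rewrite -Dp root_minCpoly.
rewrite Dg rmorphM /= rootM => /orP [hg | ].
  have g0 : g != 0.
    by apply: contraTneq (monic_neq0 mon) => g0; rewrite Dg g0 mul0r eqxx.
  have := dv g; rewrite hg => /esym dvg.
  have := dvdp_leq g0 dvg; rewrite Dg size_Mmonic ?monicXsubC // size_XsubC addn2 /=.
  by rewrite ltnn.
by rewrite rmorphB /= map_polyX map_polyC /= root_XsubC => /eqP.
Qed.

Lemma root_ineq_strict m (b : algC) : (2 <= m)%N -> root (psi m.+1) b ->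
  1 <= `|m%:R / b| -> `|1 + m%:R / b| < `|m%:R / b| ^+ m.
Proof.
move=> hm hb r1; have m0 : (0 < m)%N by apply: leq_trans hm.
have Ht := t_eq m0 hb.
apply: ineqA => //; first exact: F2_lem.
exact: F4_lem.
Qed.

Lemma root_ineq m (b : algC) : (2 <= m)%N -> root (psi m.+1) b ->
  `|1 + m%:R / b| <= `|m%:R / b| ^+ m.
Proof.
move=> hm hb; have m0 : (0 < m)%N by apply: leq_trans hm.
have [r1|r1] := boolP (1 <= `|m%:R / b|); first by rewrite ltW // root_ineq_strict.
have r1' : `|m%:R / b| < 1 by rewrite real_ltNge ?nneg_real.
move: hm; rewrite leq_eqVlt; case/orP => [/eqP hm2 | hm3].
  subst m; exfalso; move: r1; apply/negP/negPn.
  have := psi_root_eq hb; move/eqP; rewrite -subr_eq0.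
  have -> : b ^+ 2 * (b + 3%:R) - 2%:R ^+ 2 = (b - 1) * (b + 2%:R) ^+ 2 :> algC by ring.
  rewrite mulf_eq0 expf_eq0 /= subr_eq0 addr_eq0 => /orP [/eqP -> | /eqP ->].
    by rewrite divr1 normr_nat ler1n.
  by rewrite invrN mulrN divff ?pnatr_eq0 // normrN normr1.
apply: ineqB => //; first exact: F2_lem (t_eq m0 hb).
exact: F3_lem.
Qed.

Unset Implicit Arguments.

Theorem mainTheorem19 (s : nat) (alpha : algC) (betas : seq algC) :
  (3 <= s)%N ->
  nontrivial_root s alpha ->
  minCpoly alpha = \prod_(b <- betas) ('X - b%:P) ->
  let d := size betas in
  let M := \prod_(b <- betas) (s%:R + b) in
  let N := \prod_(b <- betas) b in
  exists n : int,
    [/\ (2 <= `|n|)%N, (n %| (s.-1)%:Z)%Z,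
        M = (n%:~R) ^+ s.-1 & n%:~R * N = (s.-1)%:R ^+ d].
Proof.
case: s => [|m] // hm Hnt HP d M N /=.
have hm2 : (2 <= m)%N := hm.
have m0 : (0 < m)%N := ltnW hm2.
have hroot : root (psi m.+1) alpha by case/andP: Hnt.
have [p [Dp mon] dv] := minCpolyP alpha.
have Epsi : psi m.+1 = map_poly ratr
    ('X ^+ m * ('X + (m.+1%:R)%:P) - ((m ^ m)%N%:R)%:P : {poly rat}).
  by rewrite /psi /= rmorphB rmorphM rmorphD /= map_polyXn map_polyX !map_polyC /= !rmorph_nat natrX.
have Pdvd : minCpoly alpha %| psi m.+1.
  by rewrite Dp Epsi dvdp_map -dv -Epsi.
have hA : size ('X^m * ('X + (m.+1%:R)%:P) : {poly algC}) = m.+2.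
  by rewrite size_mul ?size_polyXn ?size_XaddC ?addn2 // monic_neq0 ?monicXn ?monicXaddC.
have size_psi : size (psi m.+1) = m.+2.
  have hA' : size ('X^m * ('X + (m.+1%:R)%:P) : {poly algC}) = m.+2.
    by rewrite size_mul ?size_polyXn ?size_XaddC ?addn2 // monic_neq0 ?monicXn ?monicXaddC.
  rewrite /psi /= size_polyDl hA //.
  rewrite size_polyN; by apply: leq_ltn_trans (size_polyC_leq1 _) _.
have psi_lead : lead_coef (psi m.+1) = 1.
  rewrite /psi /= lead_coefDl ?lead_coefM ?lead_coefXn ?lead_coefXaddC ?mulr1 //.
  by rewrite hA size_polyN; apply: leq_ltn_trans (size_polyC_leq1 _) _.
set Q := psi m.+1 %/ minCpoly alpha.
have EQ : Q * minCpoly alpha = psi m.+1 by rewrite divpK.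
have Qlead : lead_coef Q = 1.
  by have := congr1 lead_coef EQ; rewrite lead_coefM (monicP (minCpoly_monic _)) mulr1 psi_lead.
have [qs DQ] := closed_field_poly_normal Q.
rewrite Qlead scale1r in DQ.
have Epsi2 : psi m.+1 = \prod_(q <- qs) ('X - q%:P) * \prod_(b <- betas) ('X - b%:P).
  by rewrite -EQ -HP -DQ.
have rootb : forall b, b \in betas -> root (psi m.+1) b.
  by move=> b hb; rewrite Epsi2 rootM !root_prod_XsubC hb orbT.
have rootq : forall q, q \in qs -> root (psi m.+1) q.
  by move=> q hq; rewrite Epsi2 rootM !root_prod_XsubC hq.
have sizes : (size qs + d = m.+1)%N.
  have := congr1 (fun p : {poly algC} => size p) Epsi2.
  rewrite size_psi size_mul ?monic_prod_XsubC ?monic_neq0 ?monic_prod_XsubC // !size_prod_XsubC /d.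
  by rewrite addSn addnS /= => [[]].
have b0 : forall b, b \in betas -> b != 0 by move=> b /rootb; apply: psi_root_neq0.
have q0 : forall q, q \in qs -> q != 0 by move=> q /rootq; apply: psi_root_neq0.
have Nb0 : N != 0 by rewrite prodf_seq_neq0; apply/allP => b /b0.
have Nq0 : \prod_(q <- qs) q != 0 by rewrite prodf_seq_neq0; apply/allP => q /q0.
have prodall : \prod_(q <- qs) q * N = (-1) ^+ m * m%:R ^+ m.
  have := congr1 (fun p : {poly algC} => p.[0]) Epsi2.
  rewrite /= psi_hornerE hornerM !horner_prod expr0n eqn0Ngt m0 mul0r sub0r.
  under eq_bigr do rewrite hornerXsubC sub0r.
  under [X in _ = _ * X]eq_bigr do rewrite hornerXsubC sub0r.
  rewrite !prod_opp -/N mulrACA -exprD sizes => h.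
  by rewrite -[LHS](signrMK m.+1) -h exprS; ring.
have PCrat : minCpoly alpha \is a polyOver Crat.
  by apply/polyOverP => i; rewrite Dp coef_map Crat_rat.
have NCrat : N \in Crat.
  have : (minCpoly alpha).[0] \in Crat by rewrite rpred_horner.
  rewrite HP horner_prod.
  under eq_bigr do rewrite hornerXsubC sub0r.
  rewrite prod_opp -/N -/d => h.
  by rewrite -(signrMK d N) rpredM // rpredX // rpredN rpred1.
pose t := fun b : algC => m%:R / b.
pose n_alg := \prod_(b <- betas) t b.
pose co := \prod_(q <- qs) t q.
have n_alg0 : n_alg != 0.
  rewrite prodf_seq_neq0; apply/allP => b hb /=.
  by rewrite mulf_neq0 ?invr_eq0 ?pnatr_eq0 -?lt0n ?b0.
have n_algE : n_alg = m%:R ^+ d / N by rewrite /n_alg prodf_div prod_cst.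
have coE : co = m%:R ^+ (size qs) / \prod_(q <- qs) q by rewrite /co prodf_div prod_cst.
have hnc : n_alg * co = (-1) ^+ m * m%:R.
  rewrite n_algE coE mulrACA -exprD addnC sizes -invfM [N * _]mulrC prodall.
  rewrite invfM invr_sign exprS.
  have A0 : (m%:R : algC) ^+ m != 0 by rewrite expf_neq0 // pnatr_eq0 -lt0n.
  by field.
have n_Cint : n_alg \is a Num.int.
  apply: Cint_rat_Aint.
    by rewrite n_algE rpredM ?rpredV // rpredX ?rpred_nat.
  by rewrite /n_alg big_seq; apply: rpred_prod => b hb; exact: (t_Aint m0 (rootb b hb)).
have co_Cint : co \is a Num.int.
  apply: Cint_rat_Aint.
    have -> : co = (-1) ^+ m * m%:R / n_alg by rewrite -hnc mulrC mulKf.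
    by rewrite rpredM ?rpredV ?rpredM ?rpredX ?rpredN ?rpred1 ?rpred_nat // n_algE rpredM ?rpredV // rpredX ?rpred_nat.
  by rewrite /co big_seq; apply: rpred_prod => q hq; exact: (t_Aint m0 (rootq q hq)).
have [z Hz] := intrP n_Cint.
have [w Hw] := intrP co_Cint.
have hzw : z * w = (-1) ^+ m * m%:Z.
  apply: (@intr_inj algC); rewrite intrM -Hz -Hw hnc.
  by rewrite rmorphM /= rmorph_sign.
exists z; split.
- rewrite ltnNge; apply/negP => hz1.
  have z0 : z != 0 by apply: contraNneq n_alg0 => z0; rewrite Hz z0.
  have z1 : `|z|%N = 1%N.
    have : (0 < `|z|%N)%N by rewrite absz_gt0.
    by move: hz1; case: (`|z|%N) => [|[|]].
  have nz1 : `|n_alg| = 1 by rewrite Hz -intr_norm -abszE z1.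
  pose Tp := \prod_(b <- betas) (1 + t b).
  have Tp_Cint : Tp \is a Num.int.
    apply: Cint_rat_Aint.
      have -> : Tp = \prod_(b <- betas) (m%:R + b) / N.
        rewrite /Tp /N -prodf_div; apply: eq_big_seq => b hb; rewrite /t.
        by have := b0 b hb => bn0; field.
      rewrite rpredM ?rpredV //.
      have : (minCpoly alpha).[- m%:R] \in Crat by rewrite rpred_horner ?rpredN ?rpred_nat.
      rewrite HP horner_prod.
      under eq_bigr do rewrite hornerXsubC -opprD.
      rewrite prod_opp -/d => h.
      by rewrite -(signrMK d (\prod_(b <- betas) (m%:R + b))) rpredM // rpredX // rpredN rpred1.
    rewrite /Tp big_seq; apply: rpred_prod => b hb.
    by rewrite rpredD // (t_Aint m0 (rootb b hb)).
  have tn0 : forall b, b \in betas -> 0 < `|t b|.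
    by move=> b hb; rewrite normr_gt0 /t mulf_neq0 ?invr_eq0 ?pnatr_eq0 -?lt0n ?b0.
  have [b1 hb1] : exists b, b \in betas.
    case E: betas => [|b l]; last by exists b; rewrite mem_head.
    by have := size_minCpoly alpha; rewrite HP E big_nil size_poly1.
  have key : `|Tp| < 1.
    have E1 : \prod_(b <- betas) `|t b| ^+ m = 1.
      by rewrite prodrXl -normr_prod -/n_alg nz1 expr1n.
    rewrite /Tp normr_prod -[X in _ < X]E1.
    apply: (@prod_lt betas (fun b => `|1 + t b|) (fun b => `|t b| ^+ m)).
    - by move=> i _; rewrite normr_ge0.
    - by move=> i hi; apply: root_ineq hm2 (rootb i hi).
    - by move=> i hi; rewrite exprn_gt0 // tn0.
    case: (boolP (has (fun b => 1 <= `|t b|) betas)) => [/hasP [b hb h1] | /hasPn hall].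
      by exists b => //; apply: root_ineq_strict hm2 (rootb b hb) h1.
    exfalso.
    have : \prod_(b <- betas) `|t b| < \prod_(b <- betas) (1 : algC).
      apply: (@prod_lt betas (fun b => `|t b|) (fun b => 1)).
      - by move=> i _; rewrite normr_ge0.
      - move=> i hi; have := hall i hi; rewrite /= -real_ltNge ?nneg_real ?normr_ge0 ?ler01 //.
        exact: ltW.
      - by move=> *; exact: ltr01.
      exists b1 => //; have := hall b1 hb1; rewrite /= -real_ltNge ?nneg_real ?normr_ge0 ?ler01 //.
    by rewrite -normr_prod -/n_alg nz1 big1_eq ltxx.
  have Tp0 : Tp = 0.
    apply/eqP; apply: contraLR key => hT.
    by rewrite -real_leNgt ?nneg_real ?normr_ge0 ?ler01 // norm_intr_ge1.
  move/eqP: Tp0; rewrite prodf_seq_eq0 => /hasP [b hb /= /eqP htb].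
  have bn0 := b0 b hb.
  have bE : b = - m%:R.
    have : (1 + t b) * b = 0 by rewrite htb mul0r.
    rewrite mulrDl mul1r /t divfK // => /eqP; rewrite addr_eq0 => /eqP.
    by [].
  have alphaE : alpha = - m%:R.
    apply: minC_rat_root; first by rewrite rpredN rpred_nat.
    by rewrite HP root_prod_XsubC -bE.
  have hev : ~~ odd m.
    have := psi_root_eq hroot; rewrite alphaE.
    have -> : - m%:R + m.+1%:R = 1 :> algC by rewrite -natr1; ring.
    rewrite mulr1 exprNn -signr_odd.
    case: (odd m) => //=; rewrite expr1 mulN1r => /eqP.
    rewrite eq_sym -addr_eq0 -mulr2n mulrn_eq0 /= expf_eq0 pnatr_eq0.
    by case/andP => _ /eqP m00; move: m0; rewrite m00.
  move: Hnt; rewrite /nontrivial_root hroot /= hev alphaE /=.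
  have E : (1 - (m%:R + 1) : algC) = - m%:R by ring.
  by rewrite -natr1 E eqxx.
- apply/dvdzP; exists ((-1) ^+ m * w).
  by rewrite -mulrA (mulrC w) hzw signrMK.
- rewrite /M -Hz /n_alg -prodrXl; apply: eq_big_seq => b hb.
  by rewrite /t t_pow // rootb.
- rewrite -Hz /n_alg /N -big_split /=.
  have -> : \prod_(b <- betas) (t b * b) = \prod_(b <- betas) (m%:R : algC).
    by apply: eq_big_seq => b hb; rewrite /t divfK ?b0.
  by rewrite prod_cst.
Qed.
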